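(* Let $\eta$ be an LTS-to-L$^2$TS transformation that in addition preserves and reflects $=_T^{\lambda}$, let $\mathcal{L}$ be an LTS and $s,t$ states of $\mathcal{L}$. Then $s=_T^{\lambda}t$ if and only if for every $\mathsf{LTL}_{-\mathsf{X}}$ formula $\psi$: $s\models^{\eta}\psi\iff t\models^{\eta}\psi$.
   Context: Fix a set $\mathrm{Act}$ of actions containing $\tau$ and a set $\mathbf{AP}$ of atomic propositions. An LTS is $(S,\to)$ with $\to\subseteq S\times\mathrm{Act}\times S$; paths are alternating sequences $s_0,a_1,s_1,\dots$ with $s_{k-1}\xrightarrow{a_k}s_k$, maximal if infinite or ending in a state without outgoing transitions. A colouring $\mathcal{C}$ maps states to colours; $\mathcal{C}(\pi)$ is obtained from $\mathcal{C}(s_0),a_1,\mathcal{C}(s_1),\dots$ by contracting every finite maximal consecutive subsequence $C,\tau,C,\dots,\tau,C$ and every infinite one $C,\tau,C,\tau,\dots$ to $C$; for $\pi$ from $s$ it is a $\mathcal{C}$-coloured trace of $s$, complete if $\pi$ is maximal, divergent if $\pi$ is infinite and $\mathcal{C}(\pi)$ finite. $\mathcal{C}$ is consistent if equally coloured states have the same $\mathcal{C}$-coloured traces, fully consistent if they have the same complete ones; a consistent $\mathcal{C}$ preserves divergence if they have the same divergent ones. $s\leftrightarrow_b t$ / $s\leftrightarrow_b^{ds}t$ / $s\leftrightarrow_b^{\Delta}t$ iff some consistent / fully consistent / consistent divergence preserving $\mathcal{C}$ has $\mathcal{C}(s)=\mathcal{C}(t)$. With $\mathbf{T}$ the trivial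 colouring (one colour for all states), $s=_T^{\lambda}t$ iff $s,t$ have the same complete $\mathbf{T}$-coloured traces. A Kripke structure is $(S,L,\to)$ with $L:S\to\mathcal{P}(\mathbf{AP})$, $\to\subseteq S\times S$; paths and maximal paths are sequences of states defined analogously. An L$^2$TS is $(S,L,\to)$ with $L:S\to\mathcal{P}(\mathbf{AP})$, $\to\subseteq S\times\mathrm{Act}\times S$; associated LTS $(S,\to)$, associated Kripke structure $(S,L,\{(s,t)\mid\exists a.\ s\xrightarrow{a}t\})$. It is consistent if (i) $s\xrightarrow{a}t$ implies ($L(s)=L(t)$ iff $a=\tau$); (ii) $s\xrightarrow{a}t$, $s'\xrightarrow{a}t'$, $L(s)=L(s')$ imply $L(t)=L(t')$; (iii) $s\xrightarrow{a}t$, $s'\xrightarrow{b}t'$, $L(s)=L(s')$, $L(t)=L(t')$ imply $a=b$. For an equivalence $\sim$ defined on LTSs and states $u,v$ of an L$^2$TS, $u\sim v$ means $L(u)=L(v)$ and $u\sim v$ in the associated LTS. An LTS-to-L$^2$TS transformation $\eta$ assigns to each LTS $\mathcal{L}$ a consistent L$^2$TS $\eta(\mathcal{L})$ and to each state $s$ of $\mathcal{L}$ a state $\eta(s)$ of $\eta(\mathcal{L})$ such that $s\sim t\iff\eta(s)\sim\eta(t)$ for each $\sim\in\{\leftrightarrow_b,\leftrightarrow_b^{ds},\leftrightarrow_b^{\Delta}\}$; it preserves and reflects $=_T^{\lambda}$ if also $s=_T^{\lambda}t\iff\eta(s)=_T^{\lambda}\eta(t)$. $\mathsf{LTL}_{-\mathsf{X}}$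 formulas: $\psi::=p\mid\neg\psi\mid\bigwedge\Psi'\mid\psi\,\mathsf{U}\,\psi$ ($p\in\mathbf{AP}$, $\Psi'$ arbitrary sets); on maximal paths of a Kripke structure: $\pi\models p$ iff $p$ is in the label of its first state; negation/conjunction as usual; $\pi\models\psi\,\mathsf{U}\,\psi'$ iff some suffix $\pi'$ of $\pi$ has $\pi'\models\psi'$ and $\pi''\models\psi$ for every suffix $\pi''$ of $\pi$ of which $\pi'$ is a proper suffix; a state satisfies $\psi$ iff all maximal paths from it do. For $s$ a state of $\mathcal{L}$: $s\models^{\eta}\psi$ iff $\eta(s)\models\psi$ in the Kripke structure associated to $\eta(\mathcal{L})$. *)

(* Defs.v *)
From Stdlib Require Import Arith.

Set Implicit Arguments.
Unset Strict Implicit.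

Section LTSdefs.
Variable Act : Type.
Variable tau : Act.

(** A (finite or infinite) path s_0, a_1, s_1, a_2, ...:
    [pst k] is s_k, [pact k] is a_{k+1} (the action of the k-th step,
    from s_k to s_{k+1}), [plen = Some n] means the path has n steps
    (ends in s_n), [plen = None] means it is infinite.  Values outside
    the range are irrelevant junk. *)
Record path (St : Type) := mkPath {
  pst : nat -> St;
  pact : nat -> Act;
  plen : option nat }.

Definition step_in (len : option nat) (k : nat) : Prop :=
  match len with None => True | Some n => k < n end.

Definition is_path (St : Type) (tr : St -> Act -> St -> Prop) (s : St) (p : path St) : Prop :=
  pst p 0 = s /\
  forall k, step_in (plen p) k -> tr (pst p k) (pact p k) (pst p (S k)).

Definition maximal (St : Type) (tr : St -> Act -> St -> Prop) (p : path St) : Prop :=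
  match plen p with
  | None => True
  | Some n => forall a u, ~ tr (pst p n) a u
  end.

(** A coloured trace C_0, b_1, C_1, b_2, C_2, ...: [ct0] is C_0 and
    [ctf j = Some (b_{j+1}, C_{j+1})]; [ctf j = None] once the trace has ended
    (a finite trace with n actions has ctf j = None for all j >= n). *)
Record ctrace (Col : Type) := mkCtrace {
  ct0 : Col;
  ctf : nat -> option (Act * Col) }.

(** [nth_sat P j k]: k is the j-th (0-based) natural number satisfying P. *)
Inductive nth_sat (P : nat -> Prop) : nat -> nat -> Prop :=
| nth_sat0 : forall k, P k -> (forall i, i < k -> ~ P i) -> nth_sat P 0 k
| nth_satS : forall j k k', nth_sat P j k -> P k' -> k < k' ->
    (forall i, k < i -> i < k' -> ~ P i) -> nth_sat P (S j) k'.

(** Contracting every maximal block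
    C,tau,C,...,tau,C (finite or infinite) to C amounts exactly to deleting
    all such inert steps. *)
Definition noninert (St Col : Type) (C : St -> Col) (p : path St) (k : nat) : Prop :=
  step_in (plen p) k /\ ~ (pact p k = tau /\ C (pst p k) = C (pst p (S k))).

Definition is_ctrace_of (St Col : Type) (C : St -> Col) (p : path St) (sigma : ctrace Col) : Prop :=
  ct0 sigma = C (pst p 0) /\
  forall j a c, ctf sigma j = Some (a, c) <->
    exists k, nth_sat (noninert C p) j k /\ pact p k = a /\ C (pst p (S k)) = c.

Definition finite_ctrace (Col : Type) (sigma : ctrace Col) : Prop :=
  exists j, ctf sigma j = None.

Section Traces.
Variables (St Col : Type) (tr : St -> Act -> St -> Prop) (C : St -> Col).

Definition ctraces (s : St) (sigma : ctrace Col) : Prop :=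
  exists p, is_path tr s p /\ is_ctrace_of C p sigma.

Definition complete_ctraces (s : St) (sigma : ctrace Col) : Prop :=
  exists p, is_path tr s p /\ maximal tr p /\ is_ctrace_of C p sigma.

Definition divergent_ctraces (s : St) (sigma : ctrace Col) : Prop :=
  exists p, is_path tr s p /\ plen p = None /\ is_ctrace_of C p sigma /\
            finite_ctrace sigma.

Definition col_consistent : Prop :=
  forall s t, C s = C t -> forall sigma, ctraces s sigma <-> ctraces t sigma.

Definition col_fully_consistent : Prop :=
  forall s t, C s = C t ->
    forall sigma, complete_ctraces s sigma <-> complete_ctraces t sigma.

Definition col_div_preserving : Prop :=
  col_consistent /\
  forall s t, C s = C t ->
    forall sigma, divergent_ctraces s sigma <-> divergent_ctraces t sigma.
End Traces.

Definition bbisim (St : Type) (tr : St -> Act -> St -> Prop) (s t : St) : Prop :=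
  exists (Col : Type) (C : St -> Col), col_consistent tr C /\ C s = C t.

Definition bbisim_ds (St : Type) (tr : St -> Act -> St -> Prop) (s t : St) : Prop :=
  exists (Col : Type) (C : St -> Col), col_fully_consistent tr C /\ C s = C t.

Definition bbisim_div (St : Type) (tr : St -> Act -> St -> Prop) (s t : St) : Prop :=
  exists (Col : Type) (C : St -> Col), col_div_preserving tr C /\ C s = C t.

Definition trT (St : Type) (tr : St -> Act -> St -> Prop) (s t : St) : Prop :=
  forall sigma : ctrace unit,
    complete_ctraces tr (fun _ => tt) s sigma <-> complete_ctraces tr (fun _ => tt) t sigma.

Record LTS := mkLTS {
  lts_st : Type;
  lts_tr : lts_st -> Act -> lts_st -> Prop }.
Arguments lts_tr : clear implicits.

Variable AP : Type.

(** labels are subsets of AP, represented as predicates; label equality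
    L(s) = L(t) is Leibniz equality of predicates (= set equality under
    functional/propositional extensionality). *)
Record L2TS := mkL2TS {
  l2_st : Type;
  l2_lab : l2_st -> (AP -> Prop);
  l2_tr : l2_st -> Act -> l2_st -> Prop }.
Arguments l2_lab : clear implicits.
Arguments l2_tr : clear implicits.

Definition l2_consistent (M : L2TS) : Prop :=
  (forall s a t, l2_tr M s a t -> (l2_lab M s = l2_lab M t <-> a = tau)) /\
  (forall s a t s' t', l2_tr M s a t -> l2_tr M s' a t' ->
      l2_lab M s = l2_lab M s' -> l2_lab M t = l2_lab M t') /\
  (forall s a t s' b t', l2_tr M s a t -> l2_tr M s' b t' ->
      l2_lab M s = l2_lab M s' -> l2_lab M t = l2_lab M t' -> a = b).

Definition l2_equiv (rel : forall St : Type, (St -> Act -> St -> Prop) -> St -> St -> Prop)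
  (M : L2TS) (u v : l2_st M) : Prop :=
  l2_lab M u = l2_lab M v /\ rel (l2_st M) (l2_tr M) u v.

Arguments l2_equiv rel M u v : clear implicits.

Definition is_transformation (eta : LTS -> L2TS)
  (etas : forall L : LTS, lts_st L -> l2_st (eta L)) : Prop :=
  forall L : LTS,
    l2_consistent (eta L) /\
    forall s t : lts_st L,
      (bbisim (lts_tr L) s t <-> l2_equiv bbisim (eta L) (etas L s) (etas L t)) /\
      (bbisim_ds (lts_tr L) s t <-> l2_equiv bbisim_ds (eta L) (etas L s) (etas L t)) /\
      (bbisim_div (lts_tr L) s t <-> l2_equiv bbisim_div (eta L) (etas L s) (etas L t)).

Definition preserves_reflects_trT (eta : LTS -> L2TS)
  (etas : forall L : LTS, lts_st L -> l2_st (eta L)) : Prop :=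
  forall (L : LTS) (s t : lts_st L),
    trT (lts_tr L) s t <-> l2_equiv trT (eta L) (etas L s) (etas L t).

End LTSdefs.

Inductive form (AP : Type) : Type :=
| FAtom : AP -> form AP
| FNeg : form AP -> form AP
| FConj : forall I : Type, (I -> form AP) -> form AP
| FUntil : form AP -> form AP -> form AP.

(** Kripke path: [kst k] is the k-th state; [klen = Some n] means the path is
    s_0 ... s_n, [None] means infinite. *)
Record kpath (St : Type) := mkKpath {
  kst : nat -> St;
  klen : option nat }.

Definition kmaximal_path (St : Type) (R : St -> St -> Prop) (p : kpath St) : Prop :=
  (forall k, step_in (klen p) k -> R (kst p k) (kst p (S k))) /\
  match klen p with
  | None => True
  | Some n => forall v, ~ R (kst p n) v
  end.

Definition pos_in (len : option nat) (k : nat) : Prop :=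
  match len with None => True | Some n => k <= n end.

Definition ksuffix (St : Type) (p : kpath St) (k : nat) : kpath St :=
  mkKpath (fun i => kst p (k + i)) (option_map (fun n => n - k) (klen p)).

Fixpoint ksat (AP St : Type) (lab : St -> (AP -> Prop)) (psi : form AP) (p : kpath St)
  {struct psi} : Prop :=
  match psi with
  | FAtom q => lab (kst p 0) q
  | FNeg psi1 => ~ ksat lab psi1 p
  | FConj f => forall i, ksat lab (f i) p
  | FUntil psi1 psi2 =>
      exists k, pos_in (klen p) k /\ ksat lab psi2 (ksuffix p k) /\
                forall i, i < k -> ksat lab psi1 (ksuffix p i)
  end.

Definition l2_krel (Act AP : Type) (M : L2TS Act AP) (u v : l2_st M) : Prop :=
  exists a, @l2_tr Act AP M u a v.

Definition l2_state_sat (Act AP : Type) (M : L2TS Act AP) (u : l2_st M) (psi : form AP) : Prop :=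
  forall p : kpath (l2_st M), kst p 0 = u -> kmaximal_path (@l2_krel Act AP M) p ->
    ksat (@l2_lab Act AP M) psi p.

(* Main.v *)
Require Import Defs.
From Stdlib Require Import Arith Lia Classical ClassicalEpsilon FunctionalExtensionality PropExtensionality.

Definition ind (P : Prop) : nat := if excluded_middle_informative P then 1 else 0.
Lemma ind_t (P : Prop) : P -> ind P = 1.
Proof. unfold ind; destruct (excluded_middle_informative P); tauto. Qed.
Lemma ind_f (P : Prop) : ~ P -> ind P = 0.
Proof. unfold ind; destruct (excluded_middle_informative P); tauto. Qed.

Fixpoint cnt (P : nat -> Prop) (k : nat) : nat :=
  match k with 0 => 0 | S k => cnt P k + ind (P k) end.

Lemma cnt_S P k : cnt P (S k) = cnt P k + ind (P k).
Proof. reflexivity. Qed.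

Lemma cnt_St P k : P k -> cnt P (S k) = S (cnt P k).
Proof. intro H; rewrite cnt_S, ind_t; auto; lia. Qed.
Lemma cnt_Sf P k : ~ P k -> cnt P (S k) = cnt P k.
Proof. intro H; rewrite cnt_S, ind_f; auto; lia. Qed.
Lemma cnt_Sle P k : cnt P (S k) <= S (cnt P k).
Proof. destruct (classic (P k)); [rewrite cnt_St|rewrite cnt_Sf]; auto. Qed.

Lemma cnt_mono P i k : i <= k -> cnt P i <= cnt P k.
Proof. induction 1; auto. rewrite cnt_S; lia. Qed.

Lemma cnt_ext P Q k : (forall i, P i <-> Q i) -> cnt P k = cnt Q k.
Proof.
  intro H; induction k; simpl; auto. rewrite IHk; f_equal.
  destruct (classic (P k)).
  - rewrite !ind_t; firstorder.
  - rewrite !ind_f; firstorder.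
Qed.

Lemma cnt_zero P k : cnt P k = 0 -> forall i, i < k -> ~ P i.
Proof.
  intros H i Hi HP. pose proof (cnt_mono P (S i) k Hi). rewrite cnt_St in H0; auto. lia.
Qed.

Lemma cnt_zero' P k : (forall i, i < k -> ~ P i) -> cnt P k = 0.
Proof.
  induction k; intros H; simpl; auto. rewrite IHk by auto. rewrite ind_f; auto.
Qed.

Lemma cnt_const P a d : (forall i, a <= i -> i < a + d -> ~ P i) -> cnt P (a + d) = cnt P a.
Proof.
  induction d; intros H. rewrite Nat.add_0_r; auto.
  rewrite Nat.add_succ_r, cnt_Sf. apply IHd; intros; apply H; lia. apply H; lia.
Qed.

Lemma cnt_last P k j : cnt P k = S j ->
  exists k0, k0 < k /\ P k0 /\ cnt P k0 = j /\ forall i, k0 < i -> i < k -> ~ P i.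
Proof.
  induction k; simpl; intros H. discriminate.
  destruct (classic (P k)) as [HP|HP].
  - rewrite ind_t in H by auto. exists k; repeat split; auto; lia.
  - rewrite ind_f in H by auto. rewrite Nat.add_0_r in H.
    destruct (IHk H) as [k0 [? [? [? ?]]]]. exists k0; repeat split; auto.
    intros i ? ?. destruct (Nat.eq_dec i k); subst; auto. apply H3; lia.
Qed.

Lemma nth_sat_cnt P j k : nth_sat P j k <-> P k /\ cnt P k = j.
Proof.
  split.
  - induction 1.
    + split; auto. apply cnt_zero'; auto.
    + destruct IHnth_sat as [HPk Hc]. split; auto.
      replace k' with (S k + (k' - S k)) by lia.
      rewrite cnt_const.
      * rewrite cnt_St, Hc; auto.
      * intros i ? ?. apply H2; lia.
  - revert k; induction j; intros k [HP Hc].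
    + constructor; auto. apply cnt_zero; auto.
    + destruct (cnt_last P k j Hc) as [k0 [? [? [? ?]]]].
      econstructor; eauto.
Qed.

Lemma least_nat (P : nat -> Prop) : (exists n, P n) -> exists n, P n /\ forall m, m < n -> ~ P m.
Proof.
  intros [n Hn]. revert Hn. induction n as [n IH] using lt_wf_ind. intro Hn.
  destruct (classic (exists m, m < n /\ P m)) as [[m [Hm1 Hm2]]|Hno].
  - apply (IH m Hm1 Hm2).
  - exists n; split; auto. intros m Hm HP; apply Hno; eauto.
Qed.

Section Kripke.
Variables (AP St : Type) (lab : St -> (AP -> Prop)).

Definition change (p : kpath St) (k : nat) : Prop :=
  step_in (klen p) k /\ lab (kst p k) <> lab (kst p (S k)).
Definition blk (p : kpath St) := cnt (change p).
Definition obsR (p : kpath St) (j : nat) (l : AP -> Prop) : Prop :=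
  exists k, pos_in (klen p) k /\ blk p k = j /\ lab (kst p k) = l.

Lemma step_pos len k : step_in len k -> pos_in len (S k).
Proof. destruct len; simpl; auto. Qed.
Lemma pos_step len k : pos_in len (S k) -> step_in len k.
Proof. destruct len; simpl; auto. Qed.
Lemma pos_le len k i : pos_in len k -> i <= k -> pos_in len i.
Proof. destruct len; simpl; auto; lia. Qed.
Lemma step_pos' len k : step_in len k -> pos_in len k.
Proof. destruct len; simpl; auto; lia. Qed.

Lemma blk_S p k : blk p (S k) <= S (blk p k).
Proof. apply cnt_Sle. Qed.
Lemma blk_mono p i k : i <= k -> blk p i <= blk p k.
Proof. apply cnt_mono. Qed.

Lemma blk_uniq_aux p k1 d : pos_in (klen p) (k1 + d) -> blk p (k1 + d) = blk p k1 ->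
  lab (kst p (k1 + d)) = lab (kst p k1).
Proof.
  induction d; intros Hp Hb. rewrite Nat.add_0_r; auto.
  rewrite Nat.add_succ_r in *.
  assert (H1 : blk p (k1 + d) = blk p k1).
  { pose proof (blk_mono p k1 (k1 + d) ltac:(lia)).
    pose proof (blk_mono p (k1 + d) (S (k1 + d)) ltac:(lia)). lia. }
  rewrite <- IHd; auto.
  - destruct (classic (change p (k1 + d))) as [Hc|Hc].
    + unfold blk in Hb, H1. rewrite cnt_St in Hb; auto. lia.
    + apply NNPP; intro Hne; apply Hc; split; auto.
  - apply (pos_le _ _ _ Hp); lia.
Qed.

Lemma blk_uniq p k1 k2 : pos_in (klen p) k1 -> pos_in (klen p) k2 -> blk p k1 = blk p k2 ->
  lab (kst p k1) = lab (kst p k2).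
Proof.
  intros H1 H2 Hb. destruct (le_ge_dec k1 k2).
  - replace k2 with (k1 + (k2 - k1)) in * by lia. symmetry; apply blk_uniq_aux; auto.
  - replace k1 with (k2 + (k1 - k2)) in * by lia. apply blk_uniq_aux; auto.
Qed.

Lemma obsR_uniq p j l l' : obsR p j l -> obsR p j l' -> l = l'.
Proof.
  intros [k [? [? ?]]] [k' [? [? ?]]]; subst. apply blk_uniq; auto.
Qed.

Lemma contig p k2 j : j <= blk p k2 -> exists k, k <= k2 /\ blk p k = j.
Proof.
  induction k2; intros H.
  - exists 0; split; auto. simpl in H. unfold blk in *; simpl in *; lia.
  - destruct (le_lt_dec j (blk p k2)).
    + destruct (IHk2 l) as [k [? ?]]. exists k; split; auto.
    + exists (S k2); split; auto. pose proof (blk_S p k2). lia.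
Qed.

Lemma obsR_contig p j1 j2 l : obsR p j2 l -> j1 <= j2 -> exists l1, obsR p j1 l1.
Proof.
  intros [k [Hp [Hb _]]] Hj. subst. destruct (contig p k j1 Hj) as [k1 [? ?]].
  exists (lab (kst p k1)), k1; repeat split; auto. eapply pos_le; eauto.
Qed.

Lemma obsR_0 p l : obsR p 0 l <-> l = lab (kst p 0).
Proof.
  split.
  - intros H. apply (obsR_uniq p 0); auto. exists 0; repeat split; auto.
    destruct (klen p); simpl; lia.
  - intros ->. exists 0; repeat split; auto. destruct (klen p); simpl; lia.
Qed.

Lemma first_block p j l : obsR p j l ->
  exists k, pos_in (klen p) k /\ blk p k = j /\ lab (kst p k) = l /\ forall m, m < k -> blk p m < j.
Proof.
  intro H. destruct (least_nat (fun k => pos_in (klen p) k /\ blk p k = j)) as [k [[Hp Hb] Hm]].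
  { destruct H as [k [? [? ?]]]; eauto. }
  exists k; repeat split; auto.
  - destruct H as [k' [? [? ?]]]; subst. apply blk_uniq; auto.
  - intros m Hmk. pose proof (blk_mono p m k ltac:(lia)).
    assert (blk p m <> j). { intro; apply (Hm m Hmk); split; auto. eapply pos_le; eauto; lia. }
    lia.
Qed.

Lemma obsR_S p j l : obsR p (S j) l <-> exists k, change p k /\ blk p k = j /\ lab (kst p (S k)) = l.
Proof.
  split.
  - intros H. destruct (first_block p (S j) l H) as [k [Hp [Hb [Hl Hm]]]].
    destruct k. { unfold blk in Hb; simpl in Hb; discriminate. }
    pose proof (Hm k ltac:(lia)). pose proof (blk_S p k).
    assert (blk p k = j) by lia.
    exists k; split; [|split; auto].
    destruct (classic (change p k)) as [Hc|Hc]; auto.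
    unfold blk in Hb, H2. rewrite cnt_Sf in Hb; auto. lia.
  - intros [k [Hc [Hb Hl]]]. exists (S k); repeat split; auto.
    apply step_pos; apply Hc. unfold blk in *. rewrite cnt_St; auto.
Qed.

Lemma obsR_diff p j l l' : obsR p j l -> obsR p (S j) l' -> l <> l'.
Proof.
  intros H1 H2. apply obsR_S in H2. destruct H2 as [k [[Hs Hc] [Hb Hl]]].
  assert (l = lab (kst p k)). { apply (obsR_uniq p j); auto. exists k; repeat split; auto. apply step_pos'; auto. }
  subst; auto.
Qed.

Lemma ksuffix_comp (p : kpath St) k i : ksuffix (ksuffix p k) i = ksuffix p (k + i).
Proof.
  destruct p as [f len]. unfold ksuffix; simpl. f_equal.
  - apply functional_extensionality; intro x. f_equal; lia.
  - destruct len; simpl; auto. f_equal; lia.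
Qed.

Lemma pos_suffix (p : kpath St) k i : pos_in (klen p) k ->
  (pos_in (klen (ksuffix p k)) i <-> pos_in (klen p) (k + i)).
Proof. destruct p as [f [n|]]; simpl; intros; lia. Qed.

Lemma step_suffix (p : kpath St) k i : pos_in (klen p) k ->
  (step_in (klen (ksuffix p k)) i <-> step_in (klen p) (k + i)).
Proof. destruct p as [f [n|]]; simpl; intros; lia. Qed.

Lemma change_suffix p k i : pos_in (klen p) k ->
  (change (ksuffix p k) i <-> change p (k + i)).
Proof.
  intro H. unfold change. rewrite step_suffix by auto. simpl.
  rewrite Nat.add_succ_r. tauto.
Qed.

Lemma blk_suffix p k i : pos_in (klen p) k -> blk (ksuffix p k) i + blk p k = blk p (k + i).
Proof.
  intro H. induction i. rewrite Nat.add_0_r; auto.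
  unfold blk in *. simpl. rewrite Nat.add_succ_r. simpl.
  assert (ind (change (ksuffix p k) i) = ind (change p (k + i))).
  { destruct (classic (change p (k + i))).
    - rewrite !ind_t; auto. apply change_suffix; auto.
    - rewrite !ind_f; auto. rewrite change_suffix; auto. }
  lia.
Qed.

Lemma obsR_suffix p k i l : pos_in (klen p) k ->
  (obsR (ksuffix p k) i l <-> obsR p (blk p k + i) l).
Proof.
  intro Hk. split.
  - intros [i' [Hp [Hb Hl]]]. exists (k + i'); repeat split; auto.
    + apply pos_suffix; auto.
    + rewrite <- blk_suffix by auto. lia.
  - intros [k2 [Hp [Hb Hl]]]. destruct (le_lt_dec k k2).
    + exists (k2 - k); repeat split.
      * apply pos_suffix; auto. replace (k + (k2 - k)) with k2 by lia; auto.
      * pose proof (blk_suffix p k (k2 - k) Hk). replace (k + (k2 - k)) with k2 in H by lia. lia.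
      * simpl. replace (k + (k2 - k)) with k2 by lia; auto.
    + pose proof (blk_mono p k2 k ltac:(lia)).
      assert (i = 0) by lia. subst i.
      exists 0; repeat split.
      * apply pos_suffix; auto. rewrite Nat.add_0_r; auto.
      * rewrite <- Hl. unfold ksuffix; simpl. rewrite Nat.add_0_r. apply blk_uniq; auto. lia.
Qed.

End Kripke.
Arguments change {AP St}.
Arguments blk {AP St}.
Arguments obsR {AP St}.
Arguments blk_S {AP St}.
Arguments blk_mono {AP St}.
Arguments blk_uniq_aux {AP St}.
Arguments blk_uniq {AP St}.
Arguments obsR_uniq {AP St}.
Arguments contig {AP St}.
Arguments obsR_contig {AP St}.
Arguments obsR_0 {AP St}.
Arguments first_block {AP St}.
Arguments obsR_S {AP St}.
Arguments obsR_diff {AP St}.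
Arguments ksuffix_comp {St}.
Arguments pos_suffix {St}.
Arguments step_suffix {St}.
Arguments change_suffix {AP St}.
Arguments blk_suffix {AP St}.
Arguments obsR_suffix {AP St}.

Section Stut.
Variables (AP St : Type) (lab : St -> (AP -> Prop)).

Definition stut (p q : kpath St) := forall j l, obsR lab p j l <-> obsR lab q j l.

Lemma stut_sym p q : stut p q -> stut q p.
Proof. unfold stut; firstorder. Qed.

Lemma pos0 (p : kpath St) : pos_in (klen p) 0.
Proof. destruct (klen p); simpl; lia. Qed.

Lemma stut_head p q : stut p q -> lab (kst p 0) = lab (kst q 0).
Proof.
  intro H. assert (obsR lab p 0 (lab (kst p 0))) by (apply obsR_0; auto).
  apply H in H0. apply obsR_0 in H0. auto.
Qed.

Lemma stut_suffix p q k k' : stut p q -> pos_in (klen p) k -> pos_in (klen q) k' ->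
  blk lab p k = blk lab q k' -> stut (ksuffix p k) (ksuffix q k').
Proof.
  intros H Hk Hk' Hb j l. rewrite !obsR_suffix by auto. rewrite Hb. apply H.
Qed.

Lemma stut_match p q k : stut p q -> pos_in (klen p) k ->
  exists k', pos_in (klen q) k' /\ blk lab q k' = blk lab p k /\
     forall m, m < k' -> blk lab q m < blk lab p k.
Proof.
  intros H Hk. assert (obsR lab p (blk lab p k) (lab (kst p k))) by (exists k; auto).
  apply H in H0. destruct (first_block lab q _ _ H0) as [k' [? [? [? ?]]]].
  exists k'; auto.
Qed.

Lemma ksat_stut (psi : form AP) : forall p q, stut p q -> ksat lab psi p -> ksat lab psi q.
Proof.
  induction psi as [a|psi IH|I f IH|psi1 IH1 psi2 IH2]; intros p q H; simpl.
  - rewrite (stut_head p q H); auto.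
  - intros Hn Hq; apply Hn. apply (IH q p); auto. apply stut_sym; auto.
  - intros Hp i. apply (IH i p); auto.
  - intros [k [Hk [H2 H1]]].
    destruct (stut_match p q k H Hk) as [k' [Hk' [Hb Hm]]].
    exists k'; split; auto; split.
    + apply (IH2 (ksuffix p k)); auto. apply stut_suffix; auto.
    + intros i' Hi'. assert (Hpi' : pos_in (klen q) i') by (eapply pos_le; eauto; lia).
      destruct (stut_match q p i' (stut_sym _ _ H) Hpi') as [i [Hi [Hbi _]]].
      assert (i < k).
      { destruct (le_lt_dec k i); auto. pose proof (blk_mono lab p k i l).
        pose proof (Hm i' Hi'). lia. }
      apply (IH1 (ksuffix p i)); auto. apply stut_suffix; auto.
Qed.

End Stut.
Arguments stut {AP St}.
Arguments stut_sym {AP St}.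
Arguments pos0 {St}.
Arguments stut_head {AP St}.
Arguments stut_suffix {AP St}.
Arguments stut_match {AP St}.
Arguments ksat_stut {AP St}.

Section Chi.
Variables (AP St : Type) (lab : St -> (AP -> Prop)) (p : kpath St).

Definition isL (l : AP -> Prop) : form AP :=
  FConj (fun a : AP => if excluded_middle_informative (l a) then FAtom a else FNeg (FAtom a)).

Lemma isL_sat r l : ksat lab (isL l) r <-> lab (kst r 0) = l.
Proof.
  unfold isL; simpl. split.
  - intro H. apply functional_extensionality; intro a. apply propositional_extensionality.
    specialize (H a). destruct (excluded_middle_informative (l a)); simpl in H; tauto.
  - intros Heq a. destruct (excluded_middle_informative (l a)); simpl; rewrite Heq; tauto.
Qed.

Definition FTrue : form AP := @FConj AP Empty_set (fun e => match e with end).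
Definition FAnd (a b : form AP) : form AP := FConj (fun x : bool => if x then a else b).
Definition FG (a : form AP) : form AP := FNeg (FUntil FTrue (FNeg a)).

Lemma FAnd_sat a b r : ksat lab (FAnd a b) r <-> ksat lab a r /\ ksat lab b r.
Proof.
  simpl. split. intro H; split; [apply (H true)|apply (H false)].
  intros [? ?] [|]; auto.
Qed.

Lemma FG_sat a r : ksat lab (FG a) r <-> forall k, pos_in (klen r) k -> ksat lab a (ksuffix r k).
Proof.
  simpl. split.
  - intros H k Hk. apply NNPP; intro Hn. apply H. exists k; repeat split; auto.
    intros i _ [].
  - intros H [k [Hk [Hn _]]]. apply Hn; auto.
Qed.

Definition b (j : nat) : option (AP -> Prop) :=
  match excluded_middle_informative (exists l, obsR lab p j l) with
  | left H => Some (proj1_sig (constructive_indefinite_description _ H))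
  | right _ => None
  end.

Lemma b_some j l : b j = Some l -> obsR lab p j l.
Proof.
  unfold b. destruct (excluded_middle_informative _); intro H; [|discriminate].
  inversion H; subst. apply proj2_sig.
Qed.
Lemma b_none j : b j = None -> forall l, ~ obsR lab p j l.
Proof.
  unfold b. destruct (excluded_middle_informative _); intro H; [discriminate|].
  intros l Hl; apply n; eauto.
Qed.
Lemma b_of j l : obsR lab p j l -> b j = Some l.
Proof.
  intro H. destruct (b j) eqn:E.
  - f_equal. apply (obsR_uniq lab p j); auto. apply b_some; auto.
  - exfalso; apply (b_none j E l H).
Qed.

Definition LF (j : nat) : form AP := match b j with Some l => isL l | None => FTrue end.

Lemma LF_sat j l r : b j = Some l -> (ksat lab (LF j) r <-> lab (kst r 0) = l).
Proof. intro H; unfold LF; rewrite H. apply isL_sat. Qed.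

Fixpoint R (m j : nat) : form AP :=
  match m with
  | 0 => LF j
  | S m' => match b (S j) with
            | Some _ => FAnd (LF j) (FUntil (LF j) (R m' (S j)))
            | None => FG (LF j)
            end
  end.

Definition chi : form AP := FConj (fun m : nat => R m 0).

Lemma lab_suffix (r : kpath St) k : kst (ksuffix r k) 0 = kst r k.
Proof. simpl. rewrite Nat.add_0_r; auto. Qed.

Lemma R_head m j l r : b j = Some l -> ksat lab (R m j) r -> lab (kst r 0) = l.
Proof.
  intros Hb. destruct m; simpl.
  - apply LF_sat; auto.
  - destruct (b (S j)).
    + intro H. apply FAnd_sat in H. apply (LF_sat j l r Hb), H.
    + intro H. apply (FG_sat) with (k := 0) in H. 2: apply pos0.
      apply (LF_sat j l _ Hb) in H. rewrite lab_suffix in H; auto.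
Qed.

Lemma const_blk (r : kpath St) l k : (forall i, i <= k -> pos_in (klen r) i -> lab (kst r i) = l) ->
  blk lab r k = 0.
Proof.
  intro H. induction k; auto. unfold blk in *. rewrite cnt_Sf.
  - apply IHk; intros; apply H; auto.
  - intros [Hs Hc]. apply Hc. rewrite (H k), (H (S k)); try lia; auto;
    first [apply step_pos; assumption | apply step_pos'; assumption].
Qed.

Lemma R_sound m : forall j r lj, b j = Some lj -> ksat lab (R m j) r ->
  forall i l, i <= m -> (obsR lab r i l <-> obsR lab p (j + i) l).
Proof.
  induction m; intros j r lj Hb HR i l Hi.
  - assert (i = 0) by lia; subst i. rewrite Nat.add_0_r.
    rewrite obsR_0. pose proof (R_head 0 j lj r Hb HR).
    split.
    + intros ->. rewrite H. apply b_some; auto.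
    + intro H'. rewrite H. apply (obsR_uniq lab p j); auto. apply b_some; auto.
  - pose proof (R_head (S m) j lj r Hb HR) as Hh.
    assert (Hi0 : obsR lab r 0 l <-> obsR lab p j l).
    { rewrite obsR_0. split.
      + intros ->. rewrite Hh. apply b_some; auto.
      + intro H'. rewrite Hh. apply (obsR_uniq lab p j); auto. apply b_some; auto. }
    simpl in HR. destruct (b (S j)) as [l1|] eqn:Eb1.
    + apply FAnd_sat in HR. destruct HR as [_ [k [Hk [HR HL]]]].
      pose proof (R_head m (S j) l1 _ Eb1 HR) as Hk1. rewrite lab_suffix in Hk1.
      assert (Hne : lj <> l1) by (apply (obsR_diff lab p j); apply b_some; auto).
      destruct k as [|k]. { rewrite Hh in Hk1. contradiction. }
      assert (Hpre : forall i0, i0 <= k -> lab (kst r i0) = lj).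
      { intros i0 Hi0'. specialize (HL i0 ltac:(lia)). apply (LF_sat j lj _ Hb) in HL.
        rewrite lab_suffix in HL; auto. }
      assert (Hbk : blk lab r (S k) = 1).
      { unfold blk. rewrite cnt_St.
        - f_equal. apply (const_blk r lj k). intros; apply Hpre; auto.
        - split. apply pos_step; auto. rewrite Hpre, Hk1; auto. }
      destruct i as [|i].
      * rewrite Nat.add_0_r; auto.
      * rewrite <- Nat.add_succ_comm. rewrite <- (IHm (S j) (ksuffix r (S k)) l1 Eb1 HR i l) by lia.
        rewrite obsR_suffix, Hbk by auto. reflexivity.
    + rewrite FG_sat in HR.
      assert (Hall : forall k, pos_in (klen r) k -> lab (kst r k) = lj).
      { intros k Hk. specialize (HR k Hk). apply (LF_sat j lj _ Hb) in HR.
        rewrite lab_suffix in HR; auto. }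
      destruct i as [|i].
      * rewrite Nat.add_0_r; auto.
      * split.
        -- intros [k [Hk [Hbk _]]]. rewrite (const_blk r lj k) in Hbk. discriminate.
           intros; apply Hall; auto.
        -- intro H. destruct (obsR_contig lab p (S j) (j + S i) l H ltac:(lia)) as [l2 H2].
           exfalso; apply (b_none (S j) Eb1 l2 H2).
Qed.

Lemma ksuffix0 (r : kpath St) : ksuffix r 0 = r.
Proof.
  destruct r as [f [n|]]; unfold ksuffix; simpl; auto. rewrite Nat.sub_0_r; auto.
Qed.

Lemma R_complete m : forall k, pos_in (klen p) k -> ksat lab (R m (blk lab p k)) (ksuffix p k).
Proof.
  induction m; intros k Hk.
  - simpl. apply (LF_sat _ (lab (kst p k))). apply b_of; exists k; auto.
    rewrite lab_suffix; auto.
  - set (j := blk lab p k).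
    assert (Hbj : b j = Some (lab (kst p k))) by (apply b_of; exists k; auto).
    simpl. destruct (b (S j)) as [l1|] eqn:Eb1.
    + apply FAnd_sat. split.
      * apply (LF_sat _ _ _ Hbj). rewrite lab_suffix; auto.
      * destruct (first_block lab p (S j) l1 (b_some _ _ Eb1)) as [k2 [Hk2 [Hb2 [Hl2 Hm2]]]].
        assert (k < k2).
        { destruct (le_lt_dec k2 k); auto. pose proof (blk_mono lab p k2 k l). unfold j in *; lia. }
        exists (k2 - k). split; [|split].
        -- apply pos_suffix; auto. replace (k + (k2 - k)) with k2 by lia; auto.
        -- rewrite ksuffix_comp. replace (k + (k2 - k)) with k2 by lia. rewrite <- Hb2. apply IHm; auto.
        -- intros i Hi. rewrite ksuffix_comp. apply (LF_sat _ _ _ Hbj). rewrite lab_suffix.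
           apply blk_uniq. eapply pos_le; eauto; lia. auto.
           pose proof (blk_mono lab p k (k + i) ltac:(lia)). pose proof (Hm2 (k + i) ltac:(lia)).
           unfold j in *; lia.
    + apply FG_sat. intros k' Hk'. rewrite ksuffix_comp. apply (LF_sat _ _ _ Hbj). rewrite lab_suffix.
      rewrite pos_suffix in Hk' by auto.
      apply blk_uniq; auto.
      pose proof (blk_mono lab p k (k + k') ltac:(lia)).
      destruct (le_lt_dec (blk lab p (k + k')) j); [unfold j in *; lia|].
      exfalso. assert (obsR lab p (blk lab p (k + k')) (lab (kst p (k + k')))) by (exists (k + k'); auto).
      destruct (obsR_contig lab p (S j) _ _ H0 l) as [l2 H2].
      apply (b_none (S j) Eb1 l2 H2).
Qed.

Lemma chi_self : ksat lab chi p.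
Proof.
  intro m. pose proof (R_complete m 0 (pos0 p)) as H. rewrite ksuffix0 in H. exact H.
Qed.

Lemma chi_sound q : ksat lab chi q -> stut lab q p.
Proof.
  intros H j l.
  assert (Hb0 : b 0 = Some (lab (kst p 0))) by (apply b_of; apply obsR_0; auto).
  apply (R_sound j 0 q _ Hb0 (H j) j l); auto.
Qed.

End Chi.
Arguments chi {AP St}.
Arguments chi_self {AP St}.
Arguments chi_sound {AP St}.

Lemma nth_sat_uniq P j k k' : nth_sat P j k -> nth_sat P j k' -> k = k'.
Proof.
  rewrite !nth_sat_cnt. intros [H1 H2] [H3 H4].
  destruct (lt_eq_lt_dec k k') as [[Hl|]|Hl]; auto; exfalso.
  - pose proof (cnt_mono P (S k) k' Hl). rewrite cnt_St in H; auto. lia.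
  - pose proof (cnt_mono P (S k') k Hl). rewrite cnt_St in H; auto. lia.
Qed.

Lemma ctrace_exists (Act : Type) (tau : Act) (St : Type) (pi : path Act St) :
  exists sigma : ctrace Act unit, is_ctrace_of tau (fun _ => tt) pi sigma.
Proof.
  set (P := noninert tau (fun _ : St => tt) pi).
  exists (mkCtrace tt (fun j => match excluded_middle_informative (exists k, nth_sat P j k) with
     | left H => Some (pact pi (proj1_sig (constructive_indefinite_description _ H)), tt)
     | right _ => None end)).
  split; simpl; auto.
  intros j a c. destruct (excluded_middle_informative _) as [H|H].
  - destruct (constructive_indefinite_description _ H) as [k Hk]; simpl. split.
    + intro E; inversion E; subst. exists k; auto.
    + intros [k' [Hk' [Ha Hc]]]. destruct c. rewrite (nth_sat_uniq P j k k'); subst; auto.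
  - split; [discriminate|]. intros [k [Hk _]]. exfalso; eauto.
Qed.

Lemma max_exists (St : Type) (R : St -> St -> Prop) (x : St) :
  exists q, kst q 0 = x /\ kmaximal_path R q.
Proof.
  set (next := fun s => match excluded_middle_informative (exists v, R s v) with
     | left H => proj1_sig (constructive_indefinite_description _ H) | right _ => s end).
  assert (Hnext : forall s, (exists v, R s v) -> R s (next s)).
  { intros s Hs. unfold next. destruct (excluded_middle_informative _); [|contradiction].
    apply proj2_sig. }
  set (f := fun k => Nat.iter k next x).
  set (dead := fun k => ~ exists v, R (f k) v).
  destruct (classic (exists k, dead k)) as [Hd|Hd].
  - destruct (least_nat dead Hd) as [n [Hn Hm]].
    exists (mkKpath f (Some n)). split; auto. split; simpl.
    + intros k Hk. apply Hnext. apply NNPP; intro; apply (Hm k Hk); auto.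
    + intros v Hv; apply Hn; eauto.
  - exists (mkKpath f None). split; auto. split; simpl; auto.
    intros k _. apply Hnext. apply NNPP; intro; apply Hd; exists k; auto.
Qed.

Section L2.
Variables (Act : Type) (tau : Act) (AP : Type) (M : L2TS Act AP).
Hypothesis HM : l2_consistent tau M.

Notation St0 := (l2_st M).
Notation lab := (@l2_lab Act AP M).
Notation tr := (@l2_tr Act AP M).
Notation krel := (@l2_krel Act AP M).

Definition kp (pi : path Act St0) : kpath St0 := mkKpath (pst pi) (plen pi).

Lemma noninert_change x pi : is_path tr x pi -> forall k,
  noninert tau (fun _ : St0 => tt) pi k <-> change lab (kp pi) k.
Proof.
  intros [_ Hp] k. unfold noninert, change; simpl. split.
  - intros [Hs Hn]. split; auto. intro He. apply Hn; split; auto.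
    apply (proj1 HM _ _ _ (Hp k Hs)); auto.
  - intros [Hs Hn]. split; auto. intros [Ha _]. apply Hn.
    apply (proj1 HM _ _ _ (Hp k Hs)); auto.
Qed.

Lemma nth_noninert x pi j k : is_path tr x pi ->
  (nth_sat (noninert tau (fun _ : St0 => tt) pi) j k <-> change lab (kp pi) k /\ blk lab (kp pi) k = j).
Proof.
  intro H. rewrite nth_sat_cnt. unfold blk.
  rewrite (cnt_ext _ (change lab (kp pi)) k) by (apply noninert_change with x; auto).
  rewrite noninert_change by eauto. tauto.
Qed.

Lemma kp_max x pi : is_path tr x pi -> maximal tr pi -> kst (kp pi) 0 = x /\ kmaximal_path krel (kp pi).
Proof.
  intros [H0 Hp] Hm. split; auto. split; simpl.
  - intros k Hk. exists (pact pi k); auto.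
  - unfold maximal in Hm. destruct (plen pi); auto. intros v [a Ha]; eapply Hm; eauto.
Qed.

Lemma of_kpath x q : kst q 0 = x -> kmaximal_path krel q ->
  exists pi, is_path tr x pi /\ maximal tr pi /\ kp pi = q.
Proof.
  intros H0 [Hs Hm].
  set (act := fun k => match excluded_middle_informative (exists a, tr (kst q k) a (kst q (S k))) with
     | left H => proj1_sig (constructive_indefinite_description _ H) | right _ => tau end).
  exists (mkPath (kst q) act (klen q)). split; [split|split].
  - auto.
  - intros k Hk. simpl in *. unfold act. destruct (excluded_middle_informative _) as [H|H].
    + apply proj2_sig.
    + exfalso; apply H; apply Hs; auto.
  - unfold maximal; simpl. destruct (klen q); auto. intros a u Ht; apply (Hm u); exists a; auto.
  - destruct q; reflexivity.
Qed.

Lemma S1 x1 x2 pi1 pi2 sigma : is_path tr x1 pi1 -> is_path tr x2 pi2 -> lab x1 = lab x2 ->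
  is_ctrace_of tau (fun _ : St0 => tt) pi1 sigma -> is_ctrace_of tau (fun _ : St0 => tt) pi2 sigma ->
  forall j l, obsR lab (kp pi1) j l -> obsR lab (kp pi2) j l.
Proof.
  intros Hp1 Hp2 Hx H1 H2 j. induction j; intros l.
  - rewrite !obsR_0. simpl. destruct Hp1 as [-> _], Hp2 as [-> _]. congruence.
  - rewrite !obsR_S. intros [k [Hc [Hb Hl]]].
    assert (Hn : nth_sat (noninert tau (fun _ : St0 => tt) pi1) j k) by (apply (nth_noninert x1); auto).
    assert (E : ctf sigma j = Some (pact pi1 k, tt)) by (apply (proj2 H1); eauto).
    apply (proj2 H2) in E. destruct E as [k' [Hn' [Ha _]]].
    apply (nth_noninert x2) in Hn'; auto. destruct Hn' as [Hc' Hb'].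
    exists k'; split; auto; split; auto.
    assert (Hsrc : lab (kst (kp pi1) k) = lab (kst (kp pi2) k')).
    { apply (obsR_uniq lab (kp pi2) j).
      - apply IHj. exists k; repeat split; auto. apply step_pos'; apply Hc.
      - exists k'; repeat split; auto. apply step_pos'; apply Hc'. }
    rewrite <- Hl. simpl in *.
    destruct Hc as [Hs1 _], Hc' as [Hs2 _].
    symmetry. apply (proj1 (proj2 HM) (pst pi1 k) (pact pi1 k) (pst pi1 (S k)) (pst pi2 k') (pst pi2 (S k'))).
    + apply (proj2 Hp1 k Hs1).
    + rewrite <- Ha. apply (proj2 Hp2 k' Hs2).
    + exact Hsrc.
Qed.

Lemma transfer x1 x2 pi1 pi2 j k : is_path tr x1 pi1 -> is_path tr x2 pi2 -> stut lab (kp pi1) (kp pi2) ->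
  nth_sat (noninert tau (fun _ : St0 => tt) pi1) j k ->
  exists k', nth_sat (noninert tau (fun _ : St0 => tt) pi2) j k' /\ pact pi2 k' = pact pi1 k.
Proof.
  intros Hp1 Hp2 Hst Hn. apply (nth_noninert x1) in Hn; auto. destruct Hn as [Hc Hb].
  assert (O1 : obsR lab (kp pi1) (S j) (lab (kst (kp pi1) (S k)))) by (apply obsR_S; eauto).
  apply Hst in O1. apply obsR_S in O1. destruct O1 as [k' [Hc' [Hb' Hl']]].
  exists k'. split. apply (nth_noninert x2); auto.
  assert (Hsrc : lab (kst (kp pi1) k) = lab (kst (kp pi2) k')).
  { apply (obsR_uniq lab (kp pi2) j).
    - apply Hst. exists k; repeat split; auto. apply step_pos'; apply Hc.
    - exists k'; repeat split; auto. apply step_pos'; apply Hc'. }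
  simpl in *. destruct Hc as [Hs1 _], Hc' as [Hs2 _].
  symmetry. apply (proj2 (proj2 HM) _ _ _ _ _ _ (proj2 Hp1 k Hs1) (proj2 Hp2 k' Hs2)); auto.
Qed.

Lemma S2 x1 x2 pi1 pi2 sigma : is_path tr x1 pi1 -> is_path tr x2 pi2 -> stut lab (kp pi1) (kp pi2) ->
  is_ctrace_of tau (fun _ : St0 => tt) pi1 sigma -> is_ctrace_of tau (fun _ : St0 => tt) pi2 sigma.
Proof.
  intros Hp1 Hp2 Hst [H0 H1]. split.
  - destruct (ct0 sigma); auto.
  - intros j a c. rewrite H1. split.
    + intros [k [Hn [Ha Hc]]]. destruct (transfer x1 x2 pi1 pi2 j k Hp1 Hp2 Hst Hn) as [k' [? ?]].
      exists k'; split; auto; split; congruence.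
    + intros [k [Hn [Ha Hc]]].
      destruct (transfer x2 x1 pi2 pi1 j k Hp2 Hp1 (stut_sym lab _ _ Hst) Hn) as [k' [? ?]].
      exists k'; split; auto; split; congruence.
Qed.

Lemma core_fwd u v : lab u = lab v -> trT tau tr u v ->
  forall psi, @l2_state_sat Act AP M u psi -> @l2_state_sat Act AP M v psi.
Proof.
  intros Hl HT psi Hu q Hq0 Hqm.
  destruct (of_kpath v q Hq0 Hqm) as [pi2 [Hp2 [Hm2 E2]]].
  destruct (ctrace_exists Act tau St0 pi2) as [sigma Hs2].
  assert (Hc : complete_ctraces tau tr (fun _ => tt) v sigma) by (exists pi2; auto).
  apply HT in Hc. destruct Hc as [pi1 [Hp1 [Hm1 Hs1]]].
  destruct (kp_max u pi1 Hp1 Hm1) as [H10 H1m].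
  pose proof (Hu _ H10 H1m) as Hk.
  rewrite <- E2. apply (ksat_stut lab psi (kp pi1)); auto.
  intros j l; split; [apply (S1 u v pi1 pi2 sigma)|apply (S1 v u pi2 pi1 sigma)]; auto.
Qed.

Lemma core_bwd1 u v : (forall psi, @l2_state_sat Act AP M v psi -> @l2_state_sat Act AP M u psi) ->
  forall sigma, complete_ctraces tau tr (fun _ => tt) u sigma -> complete_ctraces tau tr (fun _ => tt) v sigma.
Proof.
  intros H sigma [pi1 [Hp1 [Hm1 Hs1]]].
  destruct (kp_max u pi1 Hp1 Hm1) as [H10 H1m].
  set (p := kp pi1).
  assert (Hex : exists q, kst q 0 = v /\ kmaximal_path krel q /\ ksat lab (chi lab p) q).
  { apply NNPP; intro Hn.
    assert (Hv : @l2_state_sat Act AP M v (FNeg (chi lab p))).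
    { intros q Hq0 Hqm Hc; apply Hn; eauto. }
    apply H in Hv. apply (Hv p H10 H1m). apply chi_self. }
  destruct Hex as [q [Hq0 [Hqm Hqc]]].
  destruct (of_kpath v q Hq0 Hqm) as [pi2 [Hp2 [Hm2 E2]]].
  exists pi2; split; auto; split; auto.
  apply (S2 u v pi1 pi2); auto.
  apply stut_sym. rewrite E2. apply chi_sound; auto.
Qed.

Lemma core u v : (lab u = lab v /\ trT tau tr u v) <->
  (forall psi, @l2_state_sat Act AP M u psi <-> @l2_state_sat Act AP M v psi).
Proof.
  split.
  - intros [Hl HT] psi. split.
    + apply core_fwd; auto.
    + apply core_fwd; auto. intro sigma; symmetry; apply HT.
  - intros H. split.
    + apply functional_extensionality; intro a. apply propositional_extensionality.
      assert (Hsat : forall w, @l2_state_sat Act AP M w (FAtom a) <-> lab w a).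
      { intro w. split.
        - intro Hw. destruct (max_exists St0 krel w) as [q [Hq0 Hqm]].
          specialize (Hw q Hq0 Hqm). simpl in Hw. rewrite Hq0 in Hw; auto.
        - intros Hw q Hq0 _. simpl. rewrite Hq0; auto. }
      rewrite <- !Hsat. apply H.
    + intro sigma. split; apply core_bwd1; intros psi; apply H.
Qed.

End L2.

Theorem corollary9p3 (Act : Type) (tau : Act) (AP : Type)
  (eta : LTS Act -> L2TS Act AP)
  (etas : forall L : LTS Act, lts_st L -> l2_st (eta L))
  (Heta : is_transformation tau etas)
  (HT : preserves_reflects_trT tau etas)
  (L : LTS Act) (s t : lts_st L) :
  trT tau (@lts_tr Act L) s t <->
  (forall psi : form AP,
     @l2_state_sat Act AP (eta L) (etas L s) psi <-> @l2_state_sat Act AP (eta L) (etas L t) psi).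
Proof.
  rewrite (HT L s t). unfold l2_equiv. apply core. apply (proj1 (Heta L)).
Qed.
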